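(* Let $\alpha\neq 0$ be real, let $\vec a$ be an arbitrary timelike vector of $\mathbb L^3$, and let $S$ be a spacelike surface in $\mathbb L^3$ invariant under the one-parameter group of rotations about a timelike axis $L$ and satisfying $$H(p)=\alpha\frac{\langle N(p),\vec a\rangle}{\langle p,\vec a\rangle}\qquad(p\in S).$$ Then either $L$ and $\vec a$ are parallel, or (up to a rigid motion taking $L$ to the $z$-axis) $S$ is the hyperbolic plane $\mathbb H^2(m)$ for some $m>0$, in which case $\vec a$ may be an arbitrary timelike vector.
   Context: $\mathbb L^3$ is $\mathbb R^3$ with the metric $\langle\cdot,\cdot\rangle=dx^2+dy^2-dz^2$. A spacelike surface has Riemannian induced metric and timelike unit normal $N$; $H$ is the trace of its second fundamental form with respect to $N$. Rotations about the timelike $z$-axis are the Euclidean rotations $(x,y,z)\mapsto(x\cos\theta-y\sin\theta,x\sin\theta+y\cos\theta,z)$; rotations about a general timelike axis are obtained by a rigid motion. The hyperbolic plane is $\mathbb H^2(m)=\{p\in\mathbb L^3:\langle p,p\rangle=-m^2,\ z>0\}$. *)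

(* Defs.v *)
From Stdlib Require Import Reals Lra List.
From Coquelicot Require Import Coquelicot.
Open Scope R_scope.

Record V3 := mkV3 { vx : R; vy : R; vz : R }.

Definition vadd (u v : V3) : V3 := mkV3 (vx u + vx v) (vy u + vy v) (vz u + vz v).
Definition vscale (c : R) (u : V3) : V3 := mkV3 (c * vx u) (c * vy u) (c * vz u).
Definition vsub (u v : V3) : V3 := mkV3 (vx u - vx v) (vy u - vy v) (vz u - vz v).

Definition lprod (u v : V3) : R := vx u * vx v + vy u * vy v - vz u * vz v.

Definition timelike (u : V3) : Prop := lprod u u < 0.

Definition e3 : V3 := mkV3 0 0 1.

(** Euclidean distance, used only for the (standard) topology of R^3 *)
Definition edist3 (p q : V3) : R :=
  sqrt ((vx p - vx q)^2 + (vy p - vy q)^2 + (vz p - vz q)^2).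

Definition open3 (W : V3 -> Prop) : Prop :=
  forall p, W p -> exists eps, 0 < eps /\ forall q, edist3 q p < eps -> W q.

Definition open2 (D : R -> R -> Prop) : Prop :=
  forall u v, D u v -> exists eps, 0 < eps /\
    forall u' v', Rabs (u' - u) < eps -> Rabs (v' - v) < eps -> D u' v'.

Definition connected3 (S : V3 -> Prop) : Prop :=
  forall U V : V3 -> Prop, open3 U -> open3 V ->
    (forall p, S p -> U p \/ V p) ->
    (forall p, S p -> U p -> V p -> False) ->
    (forall p, S p -> ~ U p) \/ (forall p, S p -> ~ V p).

Definition du (f : R -> R -> R) : R -> R -> R := fun u v => Derive (fun x => f x v) u.
Definition dv (f : R -> R -> R) : R -> R -> R := fun u v => Derive (fun y => f u y) v.

(** iterated partial derivative: [true] = d/du, [false] = d/dv *)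
Fixpoint dpart (l : list bool) (f : R -> R -> R) : R -> R -> R :=
  match l with
  | nil => f
  | b :: l' => if b then du (dpart l' f) else dv (dpart l' f)
  end.

Definition cont2_at (f : R -> R -> R) (u v : R) : Prop :=
  forall eps, 0 < eps -> exists delta, 0 < delta /\
    forall u' v', Rabs (u' - u) < delta -> Rabs (v' - v) < delta ->
      Rabs (f u' v' - f u v) < eps.

Definition smooth2 (D : R -> R -> Prop) (f : R -> R -> R) : Prop :=
  forall l u v, D u v ->
    cont2_at (dpart l f) u v /\
    ex_derive (fun x => dpart l f x v) u /\
    ex_derive (fun y => dpart l f u y) v.

Definition vpart (l : list bool) (X : R -> R -> V3) : R -> R -> V3 :=
  fun u v => mkV3 (dpart l (fun a b => vx (X a b)) u v)
                  (dpart l (fun a b => vy (X a b)) u v)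
                  (dpart l (fun a b => vz (X a b)) u v).

Definition Xu X := vpart (true :: nil) X.
Definition Xv X := vpart (false :: nil) X.
Definition Xuu X := vpart (true :: true :: nil) X.
Definition Xuv X := vpart (true :: false :: nil) X.
Definition Xvv X := vpart (false :: false :: nil) X.

(** Euclidean cross product (regularity = X_u, X_v linearly independent) *)
Definition ecross (u v : V3) : V3 :=
  mkV3 (vy u * vz v - vz u * vy v) (vz u * vx v - vx u * vz v) (vx u * vy v - vy u * vx v).

Definition chart (S : V3 -> Prop) (D : R -> R -> Prop) (X : R -> R -> V3) : Prop :=
  open2 D /\
  smooth2 D (fun a b => vx (X a b)) /\
  smooth2 D (fun a b => vy (X a b)) /\
  smooth2 D (fun a b => vz (X a b)) /\
  (forall u v, D u v -> S (X u v)) /\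
  (forall u v, D u v -> ecross (Xu X u v) (Xv X u v) <> mkV3 0 0 0) /\
  (forall u v u' v', D u v -> D u' v' -> X u v = X u' v' -> u = u' /\ v = v') /\
  (forall u v, D u v -> forall eps, 0 < eps -> exists delta, 0 < delta /\
     forall u' v', D u' v' -> edist3 (X u' v') (X u v) < delta ->
       Rabs (u' - u) < eps /\ Rabs (v' - v) < eps).

Definition regular_surface (S : V3 -> Prop) : Prop :=
  forall p, S p -> exists D X W, chart S D X /\ open3 W /\ W p /\
    forall q, S q -> W q -> exists u v, D u v /\ X u v = q.

Definition EE X u v := lprod (Xu X u v) (Xu X u v).
Definition FF X u v := lprod (Xu X u v) (Xv X u v).
Definition GG X u v := lprod (Xv X u v) (Xv X u v).

(** spacelike: the induced metric is Riemannian (positive definite) *)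
Definition spacelike_surface (S : V3 -> Prop) : Prop :=
  regular_surface S /\
  forall D X, chart S D X -> forall u v, D u v ->
    0 < EE X u v /\ 0 < EE X u v * GG X u v - FF X u v ^ 2.

Definition unit_timelike_normal (X : R -> R -> V3) (u v : R) (N : V3) : Prop :=
  lprod N N = -1 /\ lprod N (Xu X u v) = 0 /\ lprod N (Xv X u v) = 0.

(** H = trace (w.r.t. the induced metric) of the second fundamental form
    h_ij = <X_ij, N> with respect to the normal N *)
Definition mean_curv (X : R -> R -> V3) (u v : R) (N : V3) : R :=
  (GG X u v * lprod (Xuu X u v) N
   - 2 * FF X u v * lprod (Xuv X u v) N
   + EE X u v * lprod (Xvv X u v) N)
  / (EE X u v * GG X u v - FF X u v ^ 2).

Definition lorentz_linear (A : V3 -> V3) : Prop :=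
  (forall u w, A (vadd u w) = vadd (A u) (A w)) /\
  (forall c u, A (vscale c u) = vscale c (A u)) /\
  (forall u w, lprod (A u) (A w) = lprod u w).

Definition rigid_motion (Phi : V3 -> V3) : Prop :=
  exists A b, lorentz_linear A /\ forall p, Phi p = vadd (A p) b.

Definition rotz (theta : R) (p : V3) : V3 :=
  mkV3 (vx p * cos theta - vy p * sin theta)
       (vx p * sin theta + vy p * cos theta) (vz p).

Definition on_line (c d : V3) (p : V3) : Prop := exists t, p = vadd c (vscale t d).

Definition z_axis (p : V3) : Prop := vx p = 0 /\ vy p = 0.

Definition maps_onto (Phi : V3 -> V3) (A B : V3 -> Prop) : Prop :=
  (forall p, A p -> B (Phi p)) /\ (forall q, B q -> exists p, A p /\ Phi p = q).

(** S is invariant under the one-parameter group of rotations about the axis L: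
    the rotations about L are Phi o rotz theta o Phi^{-1}, for a rigid motion
    Phi taking the z-axis onto L. *)
Definition rot_invariant (S : V3 -> Prop) (c d : V3) : Prop :=
  exists Phi, rigid_motion Phi /\ maps_onto Phi z_axis (on_line c d) /\
    forall theta q, S (Phi q) -> S (Phi (rotz theta q)).

Definition hyperbolic_plane (m : R) (p : V3) : Prop :=
  lprod p p = - m ^ 2 /\ 0 < vz p.

Definition parallel (u w : V3) : Prop := exists lam : R, w = vscale lam u.

(* Main.v *)
Require Import Defs.
From Stdlib Require Import Reals Lra Lia List Classical FunctionalExtensionality.
From Coquelicot Require Import Coquelicot.
Open Scope R_scope.

Lemma V3_ext : forall p q : V3, vx p = vx q -> vy p = vy q -> vz p = vz q -> p = q.
Proof. intros [] [] ; simpl; intros; subst; reflexivity. Qed.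

Record M3 := mkM3 { m11 : R; m12 : R; m13 : R; m21 : R; m22 : R; m23 : R;
                    m31 : R; m32 : R; m33 : R }.

Definition mapp (M : M3) (p : V3) : V3 :=
  mkV3 (m11 M * vx p + m12 M * vy p + m13 M * vz p)
       (m21 M * vx p + m22 M * vy p + m23 M * vz p)
       (m31 M * vx p + m32 M * vy p + m33 M * vz p).

Definition mmul (M N : M3) : M3 :=
  mkM3 (m11 M * m11 N + m12 M * m21 N + m13 M * m31 N)
       (m11 M * m12 N + m12 M * m22 N + m13 M * m32 N)
       (m11 M * m13 N + m12 M * m23 N + m13 M * m33 N)
       (m21 M * m11 N + m22 M * m21 N + m23 M * m31 N)
       (m21 M * m12 N + m22 M * m22 N + m23 M * m32 N)
       (m21 M * m13 N + m22 M * m23 N + m23 M * m33 N)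
       (m31 M * m11 N + m32 M * m21 N + m33 M * m31 N)
       (m31 M * m12 N + m32 M * m22 N + m33 M * m32 N)
       (m31 M * m13 N + m32 M * m23 N + m33 M * m33 N).

Lemma mapp_mmul : forall M N p, mapp (mmul M N) p = mapp M (mapp N p).
Proof. intros [] [] []; apply V3_ext; simpl; ring. Qed.

Definition lor (M : M3) := forall x y, lprod (mapp M x) (mapp M y) = lprod x y.

Lemma mapp_add : forall M x y, mapp M (vadd x y) = vadd (mapp M x) (mapp M y).
Proof. intros [] [] []; apply V3_ext; simpl; ring. Qed.
Lemma mapp_sub : forall M x y, mapp M (vsub x y) = vsub (mapp M x) (mapp M y).
Proof. intros [] [] []; apply V3_ext; simpl; ring. Qed.
Lemma mapp_scale : forall M c x, mapp M (vscale c x) = vscale c (mapp M x).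
Proof. intros [] c []; apply V3_ext; simpl; ring. Qed.

Lemma lprod_addl : forall x y z, lprod (vadd x y) z = lprod x z + lprod y z.
Proof. intros [] [] []; unfold lprod; simpl; ring. Qed.
Lemma lprod_subl : forall x y z, lprod (vsub x y) z = lprod x z - lprod y z.
Proof. intros [] [] []; unfold lprod; simpl; ring. Qed.
Lemma lprod_scalel : forall c x z, lprod (vscale c x) z = c * lprod x z.
Proof. intros c [] []; unfold lprod; simpl; ring. Qed.
Lemma lprod_scaler : forall c x z, lprod z (vscale c x) = c * lprod z x.
Proof. intros c [] []; unfold lprod; simpl; ring. Qed.
Lemma lprod_sym : forall x y, lprod x y = lprod y x.
Proof. intros [] []; unfold lprod; simpl; ring. Qed.

Definition e1 := mkV3 1 0 0.
Definition e2 := mkV3 0 1 0.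

Definition matof (A : V3 -> V3) : M3 :=
  mkM3 (vx (A e1)) (vx (A e2)) (vx (A e3))
       (vy (A e1)) (vy (A e2)) (vy (A e3))
       (vz (A e1)) (vz (A e2)) (vz (A e3)).

Lemma matof_spec : forall A, lorentz_linear A -> forall p, A p = mapp (matof A) p.
Proof.
  intros A [Hadd [Hsc _]] p.
  assert (Hp : p = vadd (vadd (vscale (vx p) e1) (vscale (vy p) e2)) (vscale (vz p) e3)).
  { destruct p; apply V3_ext; simpl; ring. }
  rewrite Hp at 1. rewrite !Hadd, !Hsc. apply V3_ext; simpl; ring.
Qed.

Definition det3 (M : M3) : R :=
  m11 M * (m22 M * m33 M - m23 M * m32 M)
  - m12 M * (m21 M * m33 M - m23 M * m31 M)
  + m13 M * (m21 M * m32 M - m22 M * m31 M).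

Definition adj (M : M3) : M3 :=
  mkM3 (m22 M * m33 M - m23 M * m32 M) (m13 M * m32 M - m12 M * m33 M) (m12 M * m23 M - m13 M * m22 M)
       (m23 M * m31 M - m21 M * m33 M) (m11 M * m33 M - m13 M * m31 M) (m13 M * m21 M - m11 M * m23 M)
       (m21 M * m32 M - m22 M * m31 M) (m12 M * m31 M - m11 M * m32 M) (m11 M * m22 M - m12 M * m21 M).

Lemma mapp_adj : forall M x, det3 M <> 0 ->
  mapp M (vscale (/ det3 M) (mapp (adj M) x)) = x.
Proof. intros [] [] H; unfold det3 in *; simpl in *; apply V3_ext; simpl; field; auto. Qed.

(* Lorentz-adjoint J M^T J *)
Definition ladj (M : M3) : M3 :=
  mkM3 (m11 M) (m21 M) (- m31 M)
       (m12 M) (m22 M) (- m32 M)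
       (- m13 M) (- m23 M) (m33 M).

Lemma lor_left_inv : forall M, lor M -> forall x, mapp (ladj M) (mapp M x) = x.
Proof.
  intros M HM x.
  assert (H11 := HM e1 e1). assert (H12 := HM e1 e2). assert (H13 := HM e1 e3).
  assert (H22 := HM e2 e2). assert (H23 := HM e2 e3). assert (H33 := HM e3 e3).
  destruct M as [a11 a12 a13 a21 a22 a23 a31 a32 a33]; destruct x as [x1 x2 x3].
  unfold lprod, mapp, e1, e2, e3 in *; simpl in *.
  ring_simplify in H11; ring_simplify in H12; ring_simplify in H13;
  ring_simplify in H22; ring_simplify in H23; ring_simplify in H33.
  apply V3_ext; simpl.
  - transitivity ((a11 * a11 + a21 * a21 - a31 * a31) * x1 + (a11 * a12 + a21 * a22 - a31 * a32) * x2
       + (a11 * a13 + a21 * a23 - a31 * a33) * x3); [ring|].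
    replace (a11 * a11 + a21 * a21 - a31 * a31) with 1 by lra.
    replace (a11 * a12 + a21 * a22 - a31 * a32) with 0 by lra.
    replace (a11 * a13 + a21 * a23 - a31 * a33) with 0 by lra. ring.
  - transitivity ((a11 * a12 + a21 * a22 - a31 * a32) * x1 + (a12 * a12 + a22 * a22 - a32 * a32) * x2
       + (a12 * a13 + a22 * a23 - a32 * a33) * x3); [ring|].
    replace (a12 * a12 + a22 * a22 - a32 * a32) with 1 by lra.
    replace (a11 * a12 + a21 * a22 - a31 * a32) with 0 by lra.
    replace (a12 * a13 + a22 * a23 - a32 * a33) with 0 by lra. ring.
  - transitivity (-(a11 * a13 + a21 * a23 - a31 * a33) * x1 - (a12 * a13 + a22 * a23 - a32 * a33) * x2
       - (a13 * a13 + a23 * a23 - a33 * a33) * x3); [ring|].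
    replace (a13 * a13 + a23 * a23 - a33 * a33) with (-1) by lra.
    replace (a11 * a13 + a21 * a23 - a31 * a33) with 0 by lra.
    replace (a12 * a13 + a22 * a23 - a32 * a33) with 0 by lra. ring.
Qed.

Lemma lor_det : forall M, lor M -> det3 M * det3 M = 1.
Proof.
  intros M HM.
  assert (H11 := HM e1 e1). assert (H12 := HM e1 e2). assert (H13 := HM e1 e3).
  assert (H22 := HM e2 e2). assert (H23 := HM e2 e3). assert (H33 := HM e3 e3).
  destruct M as [a11 a12 a13 a21 a22 a23 a31 a32 a33].
  unfold det3, lprod, mapp, e1, e2, e3 in *; simpl in *.
  ring_simplify in H11; ring_simplify in H12; ring_simplify in H13;
  ring_simplify in H22; ring_simplify in H23; ring_simplify in H33.
  set (g11 := a11 * a11 + a21 * a21 - a31 * a31).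
  set (g12 := a11 * a12 + a21 * a22 - a31 * a32).
  set (g13 := a11 * a13 + a21 * a23 - a31 * a33).
  set (g22 := a12 * a12 + a22 * a22 - a32 * a32).
  set (g23 := a12 * a13 + a22 * a23 - a32 * a33).
  set (g33 := a13 * a13 + a23 * a23 - a33 * a33).
  assert (E : g11 * (g22 * g33 - g23 * g23) - g12 * (g12 * g33 - g23 * g13) + g13 * (g12 * g23 - g22 * g13)
    = - ((a11 * (a22 * a33 - a23 * a32) - a12 * (a21 * a33 - a23 * a31) + a13 * (a21 * a32 - a22 * a31)) *
      (a11 * (a22 * a33 - a23 * a32) - a12 * (a21 * a33 - a23 * a31) + a13 * (a21 * a32 - a22 * a31)))).
  { unfold g11, g12, g13, g22, g23, g33; ring. }
  assert (g11 = 1) by (unfold g11; lra). assert (g12 = 0) by (unfold g12; lra).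
  assert (g13 = 0) by (unfold g13; lra). assert (g22 = 1) by (unfold g22; lra).
  assert (g23 = 0) by (unfold g23; lra). assert (g33 = -1) by (unfold g33; lra).
  rewrite H, H0, H1, H2, H3, H4 in E. lra.
Qed.

Lemma lor_right_inv : forall M, lor M -> forall x, mapp M (mapp (ladj M) x) = x.
Proof.
  intros M HM x.
  assert (Hd : det3 M <> 0). { intro E. assert (H := lor_det M HM). rewrite E in H. lra. }
  set (y := vscale (/ det3 M) (mapp (adj M) x)).
  assert (Hy : mapp M y = x) by (apply mapp_adj; auto).
  rewrite <- Hy. rewrite (lor_left_inv M HM y). reflexivity.
Qed.

Lemma lor_ladj : forall M, lor M -> lor (ladj M).
Proof.
  intros M HM x y. rewrite <- (HM (mapp (ladj M) x)). rewrite !lor_right_inv; auto.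
Qed.

Lemma lprod_move : forall M, lor M -> forall x y, lprod (mapp M x) y = lprod x (mapp (ladj M) y).
Proof.
  intros M HM x y. rewrite <- (HM x). rewrite lor_right_inv; auto.
Qed.

Definition Rz (t : R) : M3 := mkM3 (cos t) (- sin t) 0 (sin t) (cos t) 0 0 0 1.

Lemma Rz_rotz : forall t p, rotz t p = mapp (Rz t) p.
Proof. intros t []; apply V3_ext; unfold rotz, mapp, Rz; simpl; ring. Qed.

Lemma lor_Rz : forall t, lor (Rz t).
Proof.
  intros t [x1 x2 x3] [y1 y2 y3]; unfold lprod, mapp, Rz; simpl.
  assert (H := sin2_cos2 t). unfold Rsqr in H.
  transitivity ((sin t * sin t + cos t * cos t) * (x1 * y1 + x2 * y2) - x3 * y3); [ring|].
  rewrite H; ring.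
Qed.

Lemma Rz_inv : forall t x, mapp (Rz (- t)) (mapp (Rz t) x) = x.
Proof.
  intros t [vx0 vy0 vz0]; unfold mapp, Rz; simpl. rewrite cos_neg, sin_neg.
  assert (H := sin2_cos2 t). unfold Rsqr in H.
  apply V3_ext; simpl.
  - transitivity ((sin t * sin t + cos t * cos t) * vx0); [ring|]. rewrite H; ring.
  - transitivity ((sin t * sin t + cos t * cos t) * vy0); [ring|]. rewrite H; ring.
  - ring.
Qed.

Definition lin4 (c1 c2 c3 c0 : R) (f1 f2 f3 : R -> R -> R) : R -> R -> R :=
  fun a b => c1 * f1 a b + c2 * f2 a b + c3 * f3 a b + c0.

Lemma is_derive_lin : forall h1 h2 h3 x d1 d2 d3 c1 c2 c3 c0,
  is_derive h1 x d1 -> is_derive h2 x d2 -> is_derive h3 x d3 ->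
  is_derive (fun y => c1 * h1 y + c2 * h2 y + c3 * h3 y + c0) x (c1 * d1 + c2 * d2 + c3 * d3 + 0).
Proof.
  intros.
  assert (E : c1 * d1 + c2 * d2 + c3 * d3 + 0 =
    Derive (fun y => c1 * h1 y + c2 * h2 y + c3 * h3 y + c0) x).
  { symmetry. apply is_derive_unique. auto_derive.
    - repeat split; eexists; eauto.
    - replace (Derive (fun x0 : R => h1 x0) x) with d1 by (symmetry; apply is_derive_unique; exact H). replace (Derive (fun x0 : R => h2 x0) x) with d2 by (symmetry; apply is_derive_unique; exact H0). replace (Derive (fun x0 : R => h3 x0) x) with d3 by (symmetry; apply is_derive_unique; exact H1). ring. }
  rewrite E. apply Derive_correct. auto_derive. repeat split; eexists; eauto.
Qed.

Definition cl (c0 : R) (l : list bool) : R := match l with nil => c0 | _ => 0 end.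

Lemma isd_u : forall (D : R -> R -> Prop) (f1 f2 f3 : R -> R -> R) (c1 c2 c3 c0 : R), open2 D -> smooth2 D f1 -> smooth2 D f2 -> smooth2 D f3 -> forall l, (forall u v, D u v -> dpart l (lin4 c1 c2 c3 c0 f1 f2 f3) u v =
     lin4 c1 c2 c3 (cl c0 l) (dpart l f1) (dpart l f2) (dpart l f3) u v) ->
  forall u v, D u v -> is_derive (fun x => dpart l (lin4 c1 c2 c3 c0 f1 f2 f3) x v) u
     (lin4 c1 c2 c3 0 (du (dpart l f1)) (du (dpart l f2)) (du (dpart l f3)) u v).
Proof.
  intros D f1 f2 f3 c1 c2 c3 c0 HD H1 H2 H3.
  intros l Hl u v Huv.
  destruct (HD u v Huv) as [eps [Heps HE]].
  apply is_derive_ext_loc with (f := fun x => c1 * dpart l f1 x v + c2 * dpart l f2 x v + c3 * dpart l f3 x v + cl c0 l).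
  - exists (mkposreal eps Heps). intros y Hy. simpl in Hy.
    rewrite Hl; [reflexivity|]. apply HE; auto. rewrite Rminus_diag, Rabs_R0; auto.
  - apply is_derive_lin; apply Derive_correct.
    + apply (H1 l u v Huv). + apply (H2 l u v Huv). + apply (H3 l u v Huv).
Qed.

Lemma isd_v : forall (D : R -> R -> Prop) (f1 f2 f3 : R -> R -> R) (c1 c2 c3 c0 : R), open2 D -> smooth2 D f1 -> smooth2 D f2 -> smooth2 D f3 -> forall l, (forall u v, D u v -> dpart l (lin4 c1 c2 c3 c0 f1 f2 f3) u v =
     lin4 c1 c2 c3 (cl c0 l) (dpart l f1) (dpart l f2) (dpart l f3) u v) ->
  forall u v, D u v -> is_derive (fun y => dpart l (lin4 c1 c2 c3 c0 f1 f2 f3) u y) v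
     (lin4 c1 c2 c3 0 (dv (dpart l f1)) (dv (dpart l f2)) (dv (dpart l f3)) u v).
Proof.
  intros D f1 f2 f3 c1 c2 c3 c0 HD H1 H2 H3.
  intros l Hl u v Huv.
  destruct (HD u v Huv) as [eps [Heps HE]].
  apply is_derive_ext_loc with (f := fun y => c1 * dpart l f1 u y + c2 * dpart l f2 u y + c3 * dpart l f3 u y + cl c0 l).
  - exists (mkposreal eps Heps). intros y Hy. simpl in Hy.
    rewrite Hl; [reflexivity|]. apply HE; auto. rewrite Rminus_diag, Rabs_R0; auto.
  - apply is_derive_lin; apply Derive_correct.
    + apply (H1 l u v Huv). + apply (H2 l u v Huv). + apply (H3 l u v Huv).
Qed.

Lemma dpart_lin : forall (D : R -> R -> Prop) (f1 f2 f3 : R -> R -> R) (c1 c2 c3 c0 : R), open2 D -> smooth2 D f1 -> smooth2 D f2 -> smooth2 D f3 -> forall l u v, D u v -> dpart l (lin4 c1 c2 c3 c0 f1 f2 f3) u v =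
     lin4 c1 c2 c3 (cl c0 l) (dpart l f1) (dpart l f2) (dpart l f3) u v.
Proof.
  intros D f1 f2 f3 c1 c2 c3 c0 HD H1 H2 H3.
  induction l as [|b l IH]; intros u v Huv; [reflexivity|].
  destruct b; simpl.
  - unfold du at 1. apply is_derive_unique. exact (isd_u D f1 f2 f3 c1 c2 c3 c0 HD H1 H2 H3 l IH u v Huv).
  - unfold dv at 1. apply is_derive_unique. exact (isd_v D f1 f2 f3 c1 c2 c3 c0 HD H1 H2 H3 l IH u v Huv).
Qed.

Lemma smooth2_lin : forall (D : R -> R -> Prop) (f1 f2 f3 : R -> R -> R) (c1 c2 c3 c0 : R), open2 D -> smooth2 D f1 -> smooth2 D f2 -> smooth2 D f3 -> smooth2 D (lin4 c1 c2 c3 c0 f1 f2 f3).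
Proof.
  intros D f1 f2 f3 c1 c2 c3 c0 HD H1 H2 H3.
  intros l u v Huv. split; [|split].
  - intros eps Heps.
    destruct (HD u v Huv) as [e0 [He0 HE]].
    set (K := Rabs c1 + Rabs c2 + Rabs c3 + 1).
    assert (HK : 0 < K) by (unfold K; pose proof (Rabs_pos c1); pose proof (Rabs_pos c2); pose proof (Rabs_pos c3); lra).
    set (e' := eps / K). assert (He' : 0 < e') by (unfold e'; apply Rdiv_lt_0_compat; auto).
    destruct (proj1 (H1 l u v Huv) e' He') as [d1 [Hd1 C1]].
    destruct (proj1 (H2 l u v Huv) e' He') as [d2 [Hd2 C2]].
    destruct (proj1 (H3 l u v Huv) e' He') as [d3 [Hd3 C3]].
    exists (Rmin e0 (Rmin d1 (Rmin d2 d3))). split.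
    { repeat apply Rmin_pos; auto. }
    intros u' v' Hu Hv.
    pose proof (Rmin_l e0 (Rmin d1 (Rmin d2 d3))). pose proof (Rmin_r e0 (Rmin d1 (Rmin d2 d3))).
    pose proof (Rmin_l d1 (Rmin d2 d3)). pose proof (Rmin_r d1 (Rmin d2 d3)).
    pose proof (Rmin_l d2 d3). pose proof (Rmin_r d2 d3).
    rewrite !(dpart_lin D f1 f2 f3 c1 c2 c3 c0 HD H1 H2 H3); auto; [|apply HE; lra].
    unfold lin4.
    assert (A1 := C1 u' v' ltac:(lra) ltac:(lra)).
    assert (A2 := C2 u' v' ltac:(lra) ltac:(lra)).
    assert (A3 := C3 u' v' ltac:(lra) ltac:(lra)).
    replace (c1 * dpart l f1 u' v' + c2 * dpart l f2 u' v' + c3 * dpart l f3 u' v' + cl c0 l -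
      (c1 * dpart l f1 u v + c2 * dpart l f2 u v + c3 * dpart l f3 u v + cl c0 l)) with
      (c1 * (dpart l f1 u' v' - dpart l f1 u v) + c2 * (dpart l f2 u' v' - dpart l f2 u v)
       + c3 * (dpart l f3 u' v' - dpart l f3 u v)) by ring.
    eapply Rle_lt_trans. { eapply Rle_trans. apply Rabs_triang. apply Rplus_le_compat_r. apply Rabs_triang. }
    rewrite !Rabs_mult.
    assert (eps = K * e') by (unfold e'; field; lra).
    pose proof (Rabs_pos c1); pose proof (Rabs_pos c2); pose proof (Rabs_pos c3).
    pose proof (Rmult_le_compat_l (Rabs c1) _ _ H9 (Rlt_le _ _ A1)).
    pose proof (Rmult_le_compat_l (Rabs c2) _ _ H10 (Rlt_le _ _ A2)).
    pose proof (Rmult_le_compat_l (Rabs c3) _ _ H11 (Rlt_le _ _ A3)).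
    rewrite H8. unfold K. lra.
  - eexists. apply (isd_u D f1 f2 f3 c1 c2 c3 c0 HD H1 H2 H3); auto. intros; apply (dpart_lin D f1 f2 f3 c1 c2 c3 c0 HD H1 H2 H3); auto.
  - eexists. apply (isd_v D f1 f2 f3 c1 c2 c3 c0 HD H1 H2 H3); auto. intros; apply (dpart_lin D f1 f2 f3 c1 c2 c3 c0 HD H1 H2 H3); auto.
Qed.

Definition trM (M : M3) : M3 := mkM3 (m11 M) (m21 M) (m31 M) (m12 M) (m22 M) (m32 M) (m13 M) (m23 M) (m33 M).

Lemma ecross_mapp : forall M x y, ecross (mapp M x) (mapp M y) = mapp (trM (adj M)) (ecross x y).
Proof. intros [] [] []; apply V3_ext; unfold ecross, mapp, trM, adj; simpl; ring. Qed.

Lemma mapp_zero : forall M, mapp M (mkV3 0 0 0) = mkV3 0 0 0.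
Proof. intros []; apply V3_ext; unfold mapp; simpl; ring. Qed.

Lemma Rabs_le_edist_x : forall p q, Rabs (vx p - vx q) <= edist3 p q.
Proof.
  intros p q. unfold edist3. rewrite <- sqrt_Rsqr_abs. apply sqrt_le_1_alt.
  unfold Rsqr. pose proof (pow2_ge_0 (vy p - vy q)). pose proof (pow2_ge_0 (vz p - vz q)). nra.
Qed.
Lemma Rabs_le_edist_y : forall p q, Rabs (vy p - vy q) <= edist3 p q.
Proof.
  intros p q. unfold edist3. rewrite <- sqrt_Rsqr_abs. apply sqrt_le_1_alt.
  unfold Rsqr. pose proof (pow2_ge_0 (vx p - vx q)). pose proof (pow2_ge_0 (vz p - vz q)). nra.
Qed.
Lemma Rabs_le_edist_z : forall p q, Rabs (vz p - vz q) <= edist3 p q.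
Proof.
  intros p q. unfold edist3. rewrite <- sqrt_Rsqr_abs. apply sqrt_le_1_alt.
  unfold Rsqr. pose proof (pow2_ge_0 (vy p - vy q)). pose proof (pow2_ge_0 (vx p - vx q)). nra.
Qed.

Lemma edist_le_sum : forall p q,
  edist3 p q <= Rabs (vx p - vx q) + Rabs (vy p - vy q) + Rabs (vz p - vz q).
Proof.
  intros p q. unfold edist3.
  set (a := vx p - vx q). set (b := vy p - vy q). set (c := vz p - vz q).
  pose proof (Rabs_pos a); pose proof (Rabs_pos b); pose proof (Rabs_pos c).
  rewrite <- (sqrt_pow2 (Rabs a + Rabs b + Rabs c)) by lra.
  apply sqrt_le_1_alt.
  rewrite <- (pow2_abs a), <- (pow2_abs b), <- (pow2_abs c). nra.
Qed.

Lemma edist_nonneg : forall p q, 0 <= edist3 p q.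
Proof. intros; unfold edist3; apply sqrt_pos. Qed.

Definition nrm (M : M3) : R := Rabs (m11 M) + Rabs (m12 M) + Rabs (m13 M) + Rabs (m21 M) + Rabs (m22 M)
  + Rabs (m23 M) + Rabs (m31 M) + Rabs (m32 M) + Rabs (m33 M) + 1.

Lemma nrm_pos : forall M, 0 < nrm M.
Proof.
  intros M; unfold nrm.
  pose proof (Rabs_pos (m11 M)); pose proof (Rabs_pos (m12 M)); pose proof (Rabs_pos (m13 M));
  pose proof (Rabs_pos (m21 M)); pose proof (Rabs_pos (m22 M)); pose proof (Rabs_pos (m23 M));
  pose proof (Rabs_pos (m31 M)); pose proof (Rabs_pos (m32 M)); pose proof (Rabs_pos (m33 M)). lra.
Qed.

Lemma abs3 : forall a b c x y z e, Rabs x <= e -> Rabs y <= e -> Rabs z <= e ->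
  Rabs (a * x + b * y + c * z) <= (Rabs a + Rabs b + Rabs c) * e.
Proof.
  intros.
  eapply Rle_trans. { eapply Rle_trans. apply Rabs_triang. apply Rplus_le_compat_r. apply Rabs_triang. }
  rewrite !Rabs_mult.
  pose proof (Rmult_le_compat_l (Rabs a) _ _ (Rabs_pos a) H).
  pose proof (Rmult_le_compat_l (Rabs b) _ _ (Rabs_pos b) H0).
  pose proof (Rmult_le_compat_l (Rabs c) _ _ (Rabs_pos c) H1). lra.
Qed.

Lemma edist_mapp : forall M p q, edist3 (mapp M p) (mapp M q) <= nrm M * edist3 p q.
Proof.
  intros M p q.
  eapply Rle_trans. apply edist_le_sum.
  pose proof (Rabs_le_edist_x p q); pose proof (Rabs_le_edist_y p q); pose proof (Rabs_le_edist_z p q).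
  pose proof (edist_nonneg p q).
  unfold mapp; simpl.
  replace (m11 M * vx p + m12 M * vy p + m13 M * vz p - (m11 M * vx q + m12 M * vy q + m13 M * vz q))
    with (m11 M * (vx p - vx q) + m12 M * (vy p - vy q) + m13 M * (vz p - vz q)) by ring.
  replace (m21 M * vx p + m22 M * vy p + m23 M * vz p - (m21 M * vx q + m22 M * vy q + m23 M * vz q))
    with (m21 M * (vx p - vx q) + m22 M * (vy p - vy q) + m23 M * (vz p - vz q)) by ring.
  replace (m31 M * vx p + m32 M * vy p + m33 M * vz p - (m31 M * vx q + m32 M * vy q + m33 M * vz q))
    with (m31 M * (vx p - vx q) + m32 M * (vy p - vy q) + m33 M * (vz p - vz q)) by ring.
  pose proof (abs3 (m11 M) (m12 M) (m13 M) _ _ _ _ H H0 H1).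
  pose proof (abs3 (m21 M) (m22 M) (m23 M) _ _ _ _ H H0 H1).
  pose proof (abs3 (m31 M) (m32 M) (m33 M) _ _ _ _ H H0 H1).
  unfold nrm. nra.
Qed.

Lemma edist_tr : forall p q t, edist3 (vadd p t) (vadd q t) = edist3 p q.
Proof. intros; unfold edist3, vadd; simpl; f_equal; ring. Qed.

Definition aff (M : M3) (t : V3) (X : R -> R -> V3) : R -> R -> V3 :=
  fun a b => vadd (mapp M (X a b)) t.

Lemma vpart_aff : forall S D X M t l u v, chart S D X -> D u v -> l <> nil ->
  vpart l (aff M t X) u v = mapp M (vpart l X u v).
Proof.
  intros S D X M t l u v [HD [Hx [Hy [Hz _]]]] Huv Hl.
  unfold vpart.
  change (fun a b => vx (aff M t X a b)) with
    (lin4 (m11 M) (m12 M) (m13 M) (vx t) (fun a b => vx (X a b)) (fun a b => vy (X a b)) (fun a b => vz (X a b))).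
  change (fun a b => vy (aff M t X a b)) with
    (lin4 (m21 M) (m22 M) (m23 M) (vy t) (fun a b => vx (X a b)) (fun a b => vy (X a b)) (fun a b => vz (X a b))).
  change (fun a b => vz (aff M t X a b)) with
    (lin4 (m31 M) (m32 M) (m33 M) (vz t) (fun a b => vx (X a b)) (fun a b => vy (X a b)) (fun a b => vz (X a b))).
  rewrite !(dpart_lin D); auto.
  destruct l; [congruence|]. unfold lin4, cl, mapp; simpl. apply V3_ext; simpl; ring.
Qed.

Lemma chart_aff : forall S D X M M' t,
  (forall x, mapp M' (mapp M x) = x) ->
  (forall p, S p -> S (vadd (mapp M p) t)) ->
  chart S D X -> chart S D (aff M t X).
Proof.
  intros S D X M M' t HMM HS Hc.
  pose proof Hc as [HD [Hx [Hy [Hz [HXS [Hreg [Hinj Hhom]]]]]]].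
  split; [auto|]. split; [|split; [|split; [|split; [|split; [|split]]]]].
  - change (fun a b => vx (aff M t X a b)) with
      (lin4 (m11 M) (m12 M) (m13 M) (vx t) (fun a b => vx (X a b)) (fun a b => vy (X a b)) (fun a b => vz (X a b))).
    apply smooth2_lin; auto.
  - change (fun a b => vy (aff M t X a b)) with
      (lin4 (m21 M) (m22 M) (m23 M) (vy t) (fun a b => vx (X a b)) (fun a b => vy (X a b)) (fun a b => vz (X a b))).
    apply smooth2_lin; auto.
  - change (fun a b => vz (aff M t X a b)) with
      (lin4 (m31 M) (m32 M) (m33 M) (vz t) (fun a b => vx (X a b)) (fun a b => vy (X a b)) (fun a b => vz (X a b))).
    apply smooth2_lin; auto.
  - intros u v Huv. unfold aff. apply HS, HXS, Huv.
  - intros u v Huv E. unfold Xu, Xv in *.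
    rewrite !(vpart_aff S D X M t) in E by (auto; discriminate).
    rewrite ecross_mapp in E.
    apply (Hreg u v Huv).
    rewrite <- (HMM (ecross _ _)).
    assert (E2 : ecross (vpart (true :: nil) X u v) (vpart (false :: nil) X u v) =
       ecross (mapp M' (mapp M (vpart (true :: nil) X u v))) (mapp M' (mapp M (vpart (false :: nil) X u v)))) by (rewrite !HMM; reflexivity).
    rewrite E2, ecross_mapp, ecross_mapp, E, !mapp_zero. reflexivity.
  - intros u v u' v' H1 H2 E. apply Hinj; auto.
    unfold aff in E.
    assert (E' : mapp M (X u v) = mapp M (X u' v')).
    { apply V3_ext; [apply (f_equal vx) in E | apply (f_equal vy) in E | apply (f_equal vz) in E];
      unfold vadd, mapp in *; simpl in *; lra. }
    rewrite <- (HMM (X u v)), <- (HMM (X u' v')), E'. reflexivity.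
  - intros u v Huv eps Heps.
    destruct (Hhom u v Huv eps Heps) as [d [Hd Hdd]].
    exists (d / nrm M'). split. { apply Rdiv_lt_0_compat; auto. apply nrm_pos. }
    intros u' v' H' Hdist. apply Hdd; auto.
    unfold aff in Hdist. rewrite edist_tr in Hdist.
    rewrite <- (HMM (X u' v')), <- (HMM (X u v)).
    eapply Rle_lt_trans. apply edist_mapp.
    pose proof (nrm_pos M').
    apply Rmult_lt_compat_l with (r := nrm M') in Hdist; auto.
    replace (nrm M' * (d / nrm M')) with d in Hdist by (field; lra). exact Hdist.
Qed.

Lemma mean_curv_aff : forall S D X M t u v N, lor M -> chart S D X -> D u v ->
  mean_curv (aff M t X) u v (mapp M N) = mean_curv X u v N /\
  (unit_timelike_normal X u v N -> unit_timelike_normal (aff M t X) u v (mapp M N)).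
Proof.
  intros S D X M t u v N HM Hc Huv.
  unfold mean_curv, unit_timelike_normal, EE, FF, GG, Xu, Xv, Xuu, Xuv, Xvv.
  rewrite !(vpart_aff S D X M t) by (auto; discriminate).
  rewrite !HM. split; auto.
Qed.

Definition lcross (x y : V3) : V3 :=
  mkV3 (vy x * vz y - vz x * vy y) (vz x * vx y - vx x * vz y) (-(vx x * vy y - vy x * vx y)).

Lemma normal_exists : forall S D X u v, spacelike_surface S -> chart S D X -> D u v ->
  exists N, unit_timelike_normal X u v N.
Proof.
  intros S D X u v [_ HS] Hc Huv.
  destruct (HS D X Hc u v Huv) as [_ Hg].
  set (x := Xu X u v) in *. set (y := Xv X u v) in *.
  unfold EE, FF, GG in Hg. fold x y in Hg.
  set (g := lprod x x * lprod y y - lprod x y ^ 2) in *.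
  exists (vscale (/ sqrt g) (lcross x y)).
  unfold unit_timelike_normal. fold x y.
  rewrite !lprod_scalel, !lprod_scaler.
  assert (E1 : lprod (lcross x y) (lcross x y) = - g) by (unfold g, lprod, lcross; simpl; ring).
  assert (E2 : lprod (lcross x y) x = 0) by (unfold lprod, lcross; simpl; ring).
  assert (E3 : lprod (lcross x y) y = 0) by (unfold lprod, lcross; simpl; ring).
  rewrite E1, E2, E3. split; [|split; ring].
  assert (Hs : sqrt g * sqrt g = g) by (apply sqrt_sqrt; lra).
  assert (Hs0 : 0 < sqrt g) by (apply sqrt_lt_R0; lra).
  replace (/ sqrt g * (/ sqrt g * - g)) with (- (g / (sqrt g * sqrt g))) by (field; lra). rewrite Hs. field. lra.
Qed.

Definition hC (C p : V3) : R := lprod (vsub p C) (vsub p C).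

Lemma quad_derive : forall (f1 f2 f3 : R -> R) (c1 c2 c3 u : R), ex_derive f1 u -> ex_derive f2 u -> ex_derive f3 u ->
  is_derive (fun x => (f1 x - c1) * (f1 x - c1) + (f2 x - c2) * (f2 x - c2) - (f3 x - c3) * (f3 x - c3)) u
   (2 * ((f1 u - c1) * Derive f1 u + (f2 u - c2) * Derive f2 u - (f3 u - c3) * Derive f3 u)).
Proof.
  intros. auto_derive. - repeat split; auto. - change (fun x : R => f1 x) with f1; change (fun x : R => f2 x) with f2; change (fun x : R => f3 x) with f3. simpl. ring.
Qed.

Lemma hC_derive_u : forall S D X C u v, chart S D X -> D u v ->
  is_derive (fun x => hC C (X x v)) u (2 * lprod (vsub (X u v) C) (Xu X u v)).
Proof.
  intros S D X C u v [HD [Hx [Hy [Hz _]]]] Huv.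
  assert (Ex := proj1 (proj2 (Hx nil u v Huv))).
  assert (Ey := proj1 (proj2 (Hy nil u v Huv))).
  assert (Ez := proj1 (proj2 (Hz nil u v Huv))). simpl in Ex, Ey, Ez.
  unfold hC, lprod, vsub, Xu, vpart; simpl. unfold du; simpl.
  exact (quad_derive (fun x => vx (X x v)) (fun x => vy (X x v)) (fun x => vz (X x v)) _ _ _ u Ex Ey Ez).
Qed.

Lemma hC_derive_v : forall S D X C u v, chart S D X -> D u v ->
  is_derive (fun y => hC C (X u y)) v (2 * lprod (vsub (X u v) C) (Xv X u v)).
Proof.
  intros S D X C u v [HD [Hx [Hy [Hz _]]]] Huv.
  assert (Ex := proj2 (proj2 (Hx nil u v Huv))).
  assert (Ey := proj2 (proj2 (Hy nil u v Huv))).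
  assert (Ez := proj2 (proj2 (Hz nil u v Huv))). simpl in Ex, Ey, Ez.
  unfold hC, lprod, vsub, Xv, vpart; simpl. unfold dv; simpl.
  exact (quad_derive (fun y => vx (X u y)) (fun y => vy (X u y)) (fun y => vz (X u y)) _ _ _ v Ex Ey Ez).
Qed.

Lemma seg_const : forall (g : R -> R) a b,
  (forall x, Rmin a b <= x <= Rmax a b -> is_derive g x 0) -> g b = g a.
Proof.
  intros g a b H.
  destruct (MVT_gen g a b (fun _ => 0)) as [c [_ Hc]].
  - intros x Hx. apply H. lra.
  - intros x Hx. apply derivable_continuous_pt. exists 0. apply is_derive_Reals. apply H; auto.
  - lra.
Qed.

Lemma between_abs : forall a b x eps, Rabs (b - a) < eps -> Rmin a b <= x <= Rmax a b -> Rabs (x - a) < eps.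
Proof.
  intros a b x eps H Hx. apply Rabs_def2 in H. destruct H.
  unfold Rmin, Rmax in Hx. apply Rabs_def1; destruct (Rle_dec a b); lra.
Qed.

Lemma square_const : forall S D X C u0 v0 eps,
  chart S D X ->
  (forall u v, D u v -> lprod (vsub (X u v) C) (Xu X u v) = 0 /\ lprod (vsub (X u v) C) (Xv X u v) = 0) ->
  (forall u' v', Rabs (u' - u0) < eps -> Rabs (v' - v0) < eps -> D u' v') ->
  forall u' v', Rabs (u' - u0) < eps -> Rabs (v' - v0) < eps -> hC C (X u' v') = hC C (X u0 v0).
Proof.
  intros S D X C u0 v0 eps Hc Horth Hsq u' v' Hu Hv.
  assert (Heps : 0 < eps) by (pose proof (Rabs_pos (u' - u0)); lra).
  assert (E1 : hC C (X u' v0) = hC C (X u0 v0)).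
  { apply (seg_const (fun x => hC C (X x v0)) u0 u').
    intros x Hx. assert (Dx : D x v0) by (apply Hsq; [eapply between_abs; eauto | rewrite Rminus_diag, Rabs_R0; auto]).
    replace 0 with (2 * lprod (vsub (X x v0) C) (Xu X x v0)) by (rewrite (proj1 (Horth x v0 Dx)); ring).
    eapply hC_derive_u; eauto. }
  rewrite <- E1.
  apply (seg_const (fun y => hC C (X u' y)) v0 v').
  intros y Hy. assert (Dy : D u' y) by (apply Hsq; [auto | eapply between_abs; eauto]).
  replace 0 with (2 * lprod (vsub (X u' y) C) (Xv X u' y)) by (rewrite (proj2 (Horth u' y Dy)); ring).
  eapply hC_derive_v; eauto.
Qed.

Lemma abs_tri : forall a b c, Rabs (a - c) <= Rabs (a - b) + Rabs (b - c).
Proof. intros. replace (a - c) with ((a - b) + (b - c)) by ring. apply Rabs_triang. Qed.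

Lemma local_const : forall S C, spacelike_surface S ->
  (forall D X u v, chart S D X -> D u v ->
     lprod (vsub (X u v) C) (Xu X u v) = 0 /\ lprod (vsub (X u v) C) (Xv X u v) = 0) ->
  forall p, S p -> exists W, open3 W /\ W p /\ forall q, S q -> W q -> hC C q = hC C p.
Proof.
  intros S C [Hreg _] Horth p Sp.
  destruct (Hreg p Sp) as [D [X [W [Hc [HW [Wp Hcov]]]]]].
  destruct (Hcov p Sp Wp) as [u0 [v0 [D0 E0]]].
  pose proof Hc as [HD [_ [_ [_ [_ [_ [_ Hhom]]]]]]].
  destruct (HD u0 v0 D0) as [eps [Heps Hsq]].
  destruct (Hhom u0 v0 D0 eps Heps) as [d [Hd Hdd]].
  exists (fun q => W q /\ Rabs (vx q - vx p) < d / 3 /\ Rabs (vy q - vy p) < d / 3 /\ Rabs (vz q - vz p) < d / 3).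
  split; [|split].
  - intros q [Wq [H1 [H2 H3]]].
    destruct (HW q Wq) as [e1 [He1 HW1]].
    set (s := Rmin e1 (Rmin (d/3 - Rabs (vx q - vx p)) (Rmin (d/3 - Rabs (vy q - vy p)) (d/3 - Rabs (vz q - vz p))))).
    assert (Hs0 : 0 < s) by (unfold s; repeat apply Rmin_pos; lra).
    exists s. split; auto. intros q' Hq'.
    pose proof (Rmin_l e1 (Rmin (d/3 - Rabs (vx q - vx p)) (Rmin (d/3 - Rabs (vy q - vy p)) (d/3 - Rabs (vz q - vz p))))).
    pose proof (Rmin_r e1 (Rmin (d/3 - Rabs (vx q - vx p)) (Rmin (d/3 - Rabs (vy q - vy p)) (d/3 - Rabs (vz q - vz p))))).
    pose proof (Rmin_l (d/3 - Rabs (vx q - vx p)) (Rmin (d/3 - Rabs (vy q - vy p)) (d/3 - Rabs (vz q - vz p)))).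
    pose proof (Rmin_r (d/3 - Rabs (vx q - vx p)) (Rmin (d/3 - Rabs (vy q - vy p)) (d/3 - Rabs (vz q - vz p)))).
    pose proof (Rmin_l (d/3 - Rabs (vy q - vy p)) (d/3 - Rabs (vz q - vz p))).
    pose proof (Rmin_r (d/3 - Rabs (vy q - vy p)) (d/3 - Rabs (vz q - vz p))).
    fold s in H, H0.
    pose proof (Rabs_le_edist_x q' q). pose proof (Rabs_le_edist_y q' q). pose proof (Rabs_le_edist_z q' q).
    pose proof (abs_tri (vx q') (vx q) (vx p)). pose proof (abs_tri (vy q') (vy q) (vy p)).
    pose proof (abs_tri (vz q') (vz q) (vz p)).
    split; [apply HW1; lra|]. lra.
  - split; auto. rewrite !Rminus_diag, !Rabs_R0. lra.
  - intros q Sq [Wq [H1 [H2 H3]]].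
    destruct (Hcov q Sq Wq) as [u' [v' [D' E']]].
    subst q p.
    assert (Hdist : edist3 (X u' v') (X u0 v0) < d).
    { eapply Rle_lt_trans. apply edist_le_sum. lra. }
    destruct (Hdd u' v' D' Hdist) as [Hu Hv].
    eapply square_const; eauto.
Qed.

Lemma conn_const : forall (S : V3 -> Prop) (g : V3 -> R), connected3 S ->
  (forall p, S p -> exists W, open3 W /\ W p /\ forall q, S q -> W q -> g q = g p) ->
  forall p q, S p -> S q -> g q = g p.
Proof.
  intros S g Hconn Hloc p0 q0 Sp0 Sq0.
  set (U := fun x => exists p W, S p /\ g p = g p0 /\ open3 W /\ W p /\ (forall q, S q -> W q -> g q = g p) /\ W x).
  set (V := fun x => exists p W, S p /\ g p <> g p0 /\ open3 W /\ W p /\ (forall q, S q -> W q -> g q = g p) /\ W x).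
  assert (oU : open3 U).
  { intros x [p [W [Sp [Hg [HW [Wp [HWq Wx]]]]]]].
    destruct (HW x Wx) as [e [He Hx]]. exists e; split; auto.
    intros q Hq. exists p, W; repeat split; auto. }
  assert (oV : open3 V).
  { intros x [p [W [Sp [Hg [HW [Wp [HWq Wx]]]]]]].
    destruct (HW x Wx) as [e [He Hx]]. exists e; split; auto.
    intros q Hq. exists p, W; repeat split; auto. }
  destruct (Hconn U V oU oV) as [HU | HV].
  - intros p Sp. destruct (Hloc p Sp) as [W [HW [Wp HWq]]].
    destruct (Req_dec (g p) (g p0)).
    + left. exists p, W; repeat split; auto.
    + right. exists p, W; repeat split; auto.
  - intros p Sp [p1 [W1 [S1 [G1 [_ [_ [Hq1 W1p]]]]]]] [p2 [W2 [S2 [G2 [_ [_ [Hq2 W2p]]]]]]].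
    apply G2. rewrite <- (Hq2 p Sp W2p), (Hq1 p Sp W1p). auto.
  - exfalso. apply (HU p0 Sp0). destruct (Hloc p0 Sp0) as [W [HW [Wp HWq]]].
    exists p0, W; repeat split; auto.
  - destruct (Hloc q0 Sq0) as [W [HW [Wp HWq]]].
    destruct (Req_dec (g q0) (g p0)); auto.
    exfalso. apply (HV q0 Sq0). exists q0, W; repeat split; auto.
Qed.

Lemma Rz_PI : forall q, mapp (Rz PI) q = mkV3 (- vx q) (- vy q) (vz q).
Proof. intros [] ; unfold mapp, Rz; simpl; rewrite cos_PI, sin_PI; apply V3_ext; simpl; ring. Qed.
Lemma Rz_PI2 : forall q, mapp (Rz (PI/2)) q = mkV3 (- vy q) (vx q) (vz q).
Proof. intros [] ; unfold mapp, Rz; simpl; rewrite cos_PI2, sin_PI2; apply V3_ext; simpl; ring. Qed.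

Lemma alg_key : forall n q a' be, vx a' ^ 2 + vy a' ^ 2 > 0 -> vz a' <> 0 ->
  lprod n a' * (lprod (mapp (Rz PI) q) a' + be) = lprod (mapp (Rz PI) n) a' * (lprod q a' + be) ->
  lprod n a' * (lprod (mapp (Rz (PI/2)) q) a' + be) = lprod (mapp (Rz (PI/2)) n) a' * (lprod q a' + be) ->
  (lprod q a' + be) * vx n = lprod n a' * vx q /\
  (lprod q a' + be) * vy n = lprod n a' * vy q /\
  (lprod q a' + be) * vz n = lprod n a' * (vz q - be / vz a').
Proof.
  intros [n1 n2 n3] [q1 q2 q3] [a1 a2 a3] be Hh Hz Epi Epi2.
  rewrite !Rz_PI in Epi. rewrite !Rz_PI2 in Epi2.
  unfold lprod in *; simpl in *.
  set (K := n1 * a1 + n2 * a2 - n3 * a3) in *.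
  set (P := q1 * a1 + q2 * a2 - q3 * a3 + be) in *.
  assert (F1 : K * (be - q3 * a3) + n3 * a3 * P = 0).
  { transitivity ((K * (- q1 * a1 + - q2 * a2 - q3 * a3 + be) -
       (- n1 * a1 + - n2 * a2 - n3 * a3) * P) / 2).
    - unfold K, P; field.
    - rewrite Epi. field. }
  assert (F2 : K * (q1 * a1 + q2 * a2) - (n1 * a1 + n2 * a2) * P = 0).
  { transitivity (- (K * (- q1 * a1 + - q2 * a2 - q3 * a3 + be) -
       (- n1 * a1 + - n2 * a2 - n3 * a3) * P) / 2).
    - unfold K, P; field.
    - rewrite Epi. field. }
  assert (F3 : K * (- q2 * a1 + q1 * a2) - (- n2 * a1 + n1 * a2) * P = 0).
  { transitivity ((K * (- q2 * a1 + q1 * a2 - q3 * a3 + be) -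
       (- n2 * a1 + n1 * a2 - n3 * a3) * P) - (K * (be - q3 * a3) + n3 * a3 * P)).
    - unfold K, P; ring.
    - rewrite Epi2, F1. ring. }
  set (ux := P * n1 - K * q1). set (uy := P * n2 - K * q2).
  assert (G1 : ux * a1 + uy * a2 = 0) by (unfold ux, uy; lra).
  assert (G2 : ux * a2 - uy * a1 = 0) by (unfold ux, uy; lra).
  assert (G : (ux * ux + uy * uy) * (a1 ^ 2 + a2 ^ 2) = 0).
  { transitivity ((ux * a1 + uy * a2) ^ 2 + (ux * a2 - uy * a1) ^ 2); [ring|]. rewrite G1, G2; ring. }
  apply Rmult_integral in G. destruct G as [G|G]; [|lra].
  assert (ux = 0) by nra. assert (uy = 0) by nra.
  split; [unfold ux in *; lra|]. split; [unfold uy in *; lra|].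
  apply (Rmult_eq_reg_r a3); auto.
  replace (K * (q3 - be / a3) * a3) with (K * (q3 * a3 - be)) by (field; auto). lra.
Qed.

Definition Sg (s : R) : M3 := mkM3 1 0 0 0 1 0 0 0 s.

Lemma lor_Sg : forall s, s * s = 1 -> lor (Sg s).
Proof. intros s Hs [x1 x2 x3] [y1 y2 y3]; unfold lprod, mapp, Sg; simpl.
  transitivity (x1 * y1 + x2 * y2 - (s * s) * x3 * y3); [ring|]. rewrite Hs; ring. Qed.

Lemma Sg_inv : forall s, s * s = 1 -> forall x, mapp (Sg s) (mapp (Sg s) x) = x.
Proof. intros s Hs [x1 x2 x3]; apply V3_ext; unfold mapp, Sg; simpl; try ring.
  transitivity ((s * s) * x3); [ring|]. rewrite Hs; ring. Qed.

Lemma lor_mmul : forall M N, lor M -> lor N -> lor (mmul M N).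
Proof. intros M N HM HN x y. rewrite !mapp_mmul, HM, HN. reflexivity. Qed.

Lemma edist_sub : forall p q t, edist3 (vsub p t) (vsub q t) = edist3 p q.
Proof. intros; unfold edist3, vsub; simpl; f_equal; ring. Qed.

Theorem proposition3p1
  (alpha : R) (a : V3) (S : V3 -> Prop) (c d : V3)
  (Halpha : alpha <> 0)
  (Ha : timelike a)
  (Hd : timelike d)
  (HS : spacelike_surface S)
  (Hconn : connected3 S)
  (Hrot : rot_invariant S c d)
  (Hden : forall p, S p -> lprod p a <> 0)
  (HH : forall D X, chart S D X -> forall u v N, D u v ->
          unit_timelike_normal X u v N ->
          mean_curv X u v N = alpha * lprod N a / lprod (X u v) a) :
  parallel d a \/
  exists Psi m, rigid_motion Psi /\ maps_onto Psi (on_line c d) z_axis /\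
    0 < m /\ forall p, S p -> hyperbolic_plane m (Psi p).
Proof.
  destruct Hrot as [Phi [[A [b [HA HPhi]]] [[Hon1 Hon2] Hinvar]]].
  set (Am := matof A).
  assert (HAm : forall p, A p = mapp Am p) by (apply matof_spec; auto).
  assert (LAm : lor Am). { intros x y. rewrite <- !HAm. apply HA. }
  set (Ai := ladj Am).
  assert (AiAm : forall x, mapp Ai (mapp Am x) = x) by (apply lor_left_inv; auto).
  assert (AmAi : forall x, mapp Am (mapp Ai x) = x) by (apply lor_right_inv; auto).
  assert (LAi : lor Ai) by (apply lor_ladj; auto).
  assert (HPhi' : forall p, Phi p = vadd (mapp Am p) b) by (intros; rewrite HPhi, HAm; auto).
  set (a' := mapp Ai a).
  set (be := lprod b a).
  set (z0 := be / vz a').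
  set (C := vadd b (vscale z0 (mapp Am e3))).
  assert (Ha' : lprod a' a' < 0) by (unfold a'; rewrite LAi; exact Ha).
  assert (Ha'z : vz a' <> 0).
  { intro E. unfold lprod in Ha'. rewrite E in Ha'. pose proof (pow2_ge_0 (vx a')). pose proof (pow2_ge_0 (vy a')). nra. }
  destruct (Rle_lt_dec (vx a' ^ 2 + vy a' ^ 2) 0) as [Hpar | Hnp].
  { left.
    assert (E1 : vx a' = 0) by (pose proof (pow2_ge_0 (vx a')); pose proof (pow2_ge_0 (vy a')); nra).
    assert (E2 : vy a' = 0) by (pose proof (pow2_ge_0 (vx a')); pose proof (pow2_ge_0 (vy a')); nra).
    destruct (Hon1 (mkV3 0 0 0)) as [t0 Ht0]. { split; reflexivity. }
    destruct (Hon1 e3) as [t1 Ht1]. { split; reflexivity. }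
    rewrite HPhi' in Ht0, Ht1.
    assert (Hae3 : mapp Am e3 = vscale (t1 - t0) d).
    { apply V3_ext; [apply (f_equal vx) in Ht0; apply (f_equal vx) in Ht1
      | apply (f_equal vy) in Ht0; apply (f_equal vy) in Ht1 | apply (f_equal vz) in Ht0; apply (f_equal vz) in Ht1];
      unfold mapp, vadd, vscale, e3 in *; simpl in *; lra. }
    exists (vz a' * (t1 - t0)).
    rewrite <- (AmAi a). fold a'.
    assert (Ea' : a' = vscale (vz a') e3).
    { destruct a' as [x y z]; simpl in *; subst; unfold vscale, e3; simpl; apply V3_ext; simpl; ring. }
    rewrite Ea' at 1. rewrite mapp_scale, Hae3. apply V3_ext; unfold vscale; simpl; ring. }
  set (Mt := fun th => mmul Am (mmul (Rz th) Ai)).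
  set (tt := fun th => vsub b (mapp (Mt th) b)).
  assert (Tform : forall th p, vadd (mapp (Mt th) p) (tt th) = vadd (mapp Am (mapp (Rz th) (mapp Ai (vsub p b)))) b).
  { intros th p. unfold tt, Mt. rewrite !mapp_mmul, !mapp_sub. apply V3_ext; unfold vadd, vsub; simpl; ring. }
  assert (Tinv : forall th p, S p -> S (vadd (mapp (Mt th) p) (tt th))).
  { intros th p Sp. rewrite Tform. rewrite <- HPhi'. rewrite <- Rz_rotz. apply Hinvar.
    rewrite HPhi', AmAi. replace (vadd (vsub p b) b) with p; auto.
    apply V3_ext; unfold vadd, vsub; simpl; ring. }
  assert (Minv : forall th x, mapp (Mt (- th)) (mapp (Mt th) x) = x).
  { intros th x. unfold Mt. rewrite !mapp_mmul, AiAm, Rz_inv, AmAi. reflexivity. }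
  assert (LMt : forall th, lor (Mt th)).
  { intros th. unfold Mt. repeat apply lor_mmul; auto. apply lor_Rz. }
  assert (Key : forall D X u v N, chart S D X -> D u v -> unit_timelike_normal X u v N ->
     vscale (lprod (X u v) a) N = vscale (lprod N a) (vsub (X u v) C)).
  { intros D X u v N Hc Huv HN.
    set (p := X u v).
    assert (Sp : S p) by (destruct Hc as [_ [_ [_ [_ [HXS _]]]]]; apply HXS; auto).
    set (n := mapp Ai N). set (q := mapp Ai (vsub p b)).
    assert (EK : lprod N a = lprod n a').
    { unfold n, a'. rewrite <- (lprod_move Am LAm). rewrite AmAi. reflexivity. }
    assert (EP : lprod p a = lprod q a' + be).
    { unfold q, a', be. rewrite <- (lprod_move Am LAm). rewrite AmAi, lprod_subl. ring. }
    assert (Rel : forall th, lprod n a' * (lprod (mapp (Rz th) q) a' + be) =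
                             lprod (mapp (Rz th) n) a' * (lprod q a' + be)).
    { intros th.
      assert (Hc' := chart_aff S D X (Mt th) (Mt (- th)) (tt th) (Minv th) (Tinv th) Hc).
      destruct (mean_curv_aff S D X (Mt th) (tt th) u v N (LMt th) Hc Huv) as [Emc Enr].
      assert (E1 := HH D X Hc u v N Huv HN).
      assert (E2 := HH D _ Hc' u v (mapp (Mt th) N) Huv (Enr HN)).
      rewrite Emc, E1 in E2. unfold aff in E2. fold p in E2.
      assert (P0 : lprod p a <> 0) by (apply Hden; auto).
      assert (P1 : lprod (vadd (mapp (Mt th) p) (tt th)) a <> 0) by (apply Hden, Tinv; auto).
      assert (EKt : lprod (mapp (Mt th) N) a = lprod (mapp (Rz th) n) a').
      { unfold Mt, n, a'. rewrite !mapp_mmul. apply (lprod_move Am LAm). }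
      assert (EPt : lprod (vadd (mapp (Mt th) p) (tt th)) a = lprod (mapp (Rz th) q) a' + be).
      { rewrite Tform. rewrite lprod_addl. unfold a', q, be. rewrite (lprod_move Am LAm). reflexivity. }
      rewrite EKt, EPt in *. rewrite EK, EP in *.
      assert (E3 : lprod n a' * (lprod (mapp (Rz th) q) a' + be) =
         (alpha * lprod n a' / (lprod q a' + be)) * ((lprod q a' + be) * (lprod (mapp (Rz th) q) a' + be)) / alpha)
        by (field; auto).
      rewrite E3, E2. field. auto. }
    destruct (alg_key n q a' be Hnp Ha'z (Rel PI) (Rel (PI/2))) as [Kx [Ky Kz]].
    assert (Ep : p = vadd (mapp Am q) b) by (unfold q; rewrite AmAi; apply V3_ext; unfold vadd, vsub; simpl; ring).
    assert (EN : N = mapp Am n) by (unfold n; rewrite AmAi; auto).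
    assert (Ew : vsub p C = mapp Am (vsub q (vscale z0 e3))).
    { rewrite Ep. unfold C. apply V3_ext; unfold mapp, vadd, vsub, vscale, e3; simpl; ring. }
    fold p. rewrite EK, EP, Ew, EN.
    rewrite <- !mapp_scale. f_equal. apply V3_ext; unfold vscale, vsub, e3; cbn [vx vy vz].
    - rewrite Kx. ring. - rewrite Ky. ring. - rewrite Kz. unfold z0. ring. }
  assert (Orth : forall D X u v, chart S D X -> D u v ->
     lprod (vsub (X u v) C) (Xu X u v) = 0 /\ lprod (vsub (X u v) C) (Xv X u v) = 0 /\ hC C (X u v) < 0).
  { intros D X u v Hc Huv.
    destruct (normal_exists S D X u v HS Hc Huv) as [N HN].
    assert (E := Key D X u v N Hc Huv HN).
    assert (Sp : S (X u v)) by (destruct Hc as [_ [_ [_ [_ [HXS _]]]]]; apply HXS; auto).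
    assert (P0 := Hden _ Sp).
    set (P := lprod (X u v) a) in *. set (K := lprod N a) in *.
    set (W := vsub (X u v) C) in *.
    assert (Ex : P * vx N = K * vx W) by (apply (f_equal vx) in E; exact E).
    assert (Ey : P * vy N = K * vy W) by (apply (f_equal vy) in E; exact E).
    assert (Ez : P * vz N = K * vz W) by (apply (f_equal vz) in E; exact E).
    destruct HN as [HNN [HNu HNv]].
    assert (K0 : K <> 0).
    { intro K0. rewrite K0 in Ex, Ey, Ez.
      assert (vx N = 0) by (apply (Rmult_eq_reg_l P); auto; lra).
      assert (vy N = 0) by (apply (Rmult_eq_reg_l P); auto; lra).
      assert (vz N = 0) by (apply (Rmult_eq_reg_l P); auto; lra).
      unfold lprod in HNN. rewrite H, H0, H1 in HNN. lra. }
    assert (EW : W = vscale (P / K) N).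
    { apply V3_ext; unfold vscale; cbn [vx vy vz].
      - apply (Rmult_eq_reg_l K); auto. rewrite <- Ex. field; auto.
      - apply (Rmult_eq_reg_l K); auto. rewrite <- Ey. field; auto.
      - apply (Rmult_eq_reg_l K); auto. rewrite <- Ez. field; auto. }
    unfold hC. fold W. rewrite EW, !lprod_scalel, !lprod_scaler.
    unfold Xu, Xv in *. rewrite HNu, HNv, HNN.
    split; [ring|split; [ring|]].
    assert (0 < (P / K) * (P / K)).
    { assert (P / K <> 0) by (unfold Rdiv; apply Rmult_integral_contrapositive; split; auto; apply Rinv_neq_0_compat; auto).
      nra. }
    lra. }
  assert (HSneg : forall p, S p -> hC C p < 0).
  { intros p Sp. destruct HS as [Hreg _].
    destruct (Hreg p Sp) as [D [X [W [Hc [_ [Wp Hcov]]]]]].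
    destruct (Hcov p Sp Wp) as [u [v [Huv E]]]. subst p. apply (Orth D X u v Hc Huv). }
  assert (Hconst : forall p q, S p -> S q -> hC C q = hC C p).
  { apply conn_const; auto. apply local_const; auto.
    intros D X u v Hc Huv. destruct (Orth D X u v Hc Huv) as [O1 [O2 _]]; auto. }
  set (wz := fun p => vz (mapp Ai (vsub p C))).
  assert (Hwz : forall p, S p -> wz p <> 0).
  { intros p Sp Ez. assert (H := HSneg p Sp). unfold hC in H. rewrite <- LAi in H.
    unfold wz in Ez. unfold lprod in H. rewrite Ez in H.
    pose proof (pow2_ge_0 (vx (mapp Ai (vsub p C)))). pose proof (pow2_ge_0 (vy (mapp Ai (vsub p C)))). nra. }
  assert (Hopen : forall s, Rabs s = 1 -> open3 (fun x => 0 < s * wz x)).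
  { intros s Hs x Hx.
    pose proof (nrm_pos Ai).
    exists (s * wz x / nrm Ai). split; [apply Rdiv_lt_0_compat; auto|].
    intros q Hq.
    assert (H1 : Rabs (wz q - wz x) <= nrm Ai * edist3 q x).
    { unfold wz. eapply Rle_trans. apply Rabs_le_edist_z. rewrite <- (edist_sub q x C). apply edist_mapp. }
    assert (H2 : nrm Ai * edist3 q x < s * wz x).
    { apply Rmult_lt_compat_l with (r := nrm Ai) in Hq; auto.
      replace (nrm Ai * (s * wz x / nrm Ai)) with (s * wz x) in Hq by (field; lra). exact Hq. }
    assert (H3 : Rabs (s * wz q - s * wz x) < s * wz x).
    { replace (s * wz q - s * wz x) with (s * (wz q - wz x)) by ring. rewrite Rabs_mult, Hs. lra. }
    apply Rabs_def2 in H3. lra. }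
  assert (Hsign : exists s, s * s = 1 /\ forall p, S p -> 0 < s * wz p).
  { destruct (Hconn (fun x => 0 < 1 * wz x) (fun x => 0 < -1 * wz x)) as [HU | HV].
    - apply Hopen. apply Rabs_R1.
    - apply Hopen. unfold Rabs; destruct (Rcase_abs (-1)); lra.
    - intros p Sp. assert (H := Hwz p Sp). destruct (Rlt_le_dec 0 (wz p)); [left|right]; lra.
    - intros p Sp H1 H2. lra.
    - exists (-1). split; [ring|]. intros p Sp. assert (H := HU p Sp). assert (H' := Hwz p Sp). lra.
    - exists 1. split; [ring|]. intros p Sp. assert (H := HV p Sp). assert (H' := Hwz p Sp). lra. }
  destruct Hsign as [s [Hs Hsp]].
  assert (Hm : exists m, 0 < m /\ forall p, S p -> hC C p = - m ^ 2).
  { destruct (classic (exists p0, S p0)) as [[p0 Sp0] | Hne].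
    - exists (sqrt (- hC C p0)). assert (H := HSneg p0 Sp0). split.
      + apply sqrt_lt_R0. lra.
      + intros p Sp. rewrite pow2_sqrt by lra. rewrite (Hconst p0 p Sp0 Sp). ring.
    - exists 1. split; [lra|]. intros p Sp. exfalso. apply Hne. eauto. }
  destruct Hm as [m [Hm0 Hmp]].
  right.
  set (RA := mmul (Sg s) Ai).
  assert (LRA : lor RA) by (apply lor_mmul; auto; apply lor_Sg; auto).
  exists (fun p => mapp RA (vsub p C)), m.
  assert (Hline : forall q, mapp RA (vsub (Phi q) C) = mapp (Sg s) (vsub q (vscale z0 e3))).
  { intros q. rewrite HPhi'. unfold RA. rewrite mapp_mmul.
    replace (vsub (vadd (mapp Am q) b) C) with (mapp Am (vsub q (vscale z0 e3))).
    - rewrite AiAm. reflexivity.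
    - unfold C. apply V3_ext; unfold mapp, vadd, vsub, vscale, e3; cbn [vx vy vz]; ring. }
  split; [|split; [|split]].
  - exists (mapp RA), (mapp RA (vscale (-1) C)). split.
    + split; [|split].
      * intros; apply mapp_add.
      * intros; apply mapp_scale.
      * apply LRA.
    + intros p. rewrite <- mapp_add. f_equal. apply V3_ext; unfold vsub, vadd, vscale; cbn [vx vy vz]; ring.
  - split.
    + intros p Hp. destruct (Hon2 p Hp) as [q [[Zx Zy] Eq]]. subst p. rewrite Hline.
      unfold z_axis, mapp, Sg, vsub, vscale, e3; cbn [vx vy vz m11 m12 m13 m21 m22 m23 m31 m32 m33].
      rewrite Zx, Zy. split; ring.
    + intros r [Zx Zy].
      set (q := vadd (mapp (Sg s) r) (vscale z0 e3)).
      assert (Zq : z_axis q).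
      { unfold q, z_axis, mapp, Sg, vadd, vscale, e3; cbn [vx vy vz m11 m12 m13 m21 m22 m23 m31 m32 m33].
        rewrite Zx, Zy. split; ring. }
      exists (Phi q). split; [apply Hon1; auto|].
      rewrite Hline.
      replace (vsub q (vscale z0 e3)) with (mapp (Sg s) r).
      * apply Sg_inv; auto.
      * unfold q. apply V3_ext; unfold vsub, vadd, vscale; cbn [vx vy vz]; ring.
  - exact Hm0.
  - intros p Sp. split.
    + rewrite LRA. apply Hmp; auto.
    + assert (H := Hsp p Sp). unfold wz in H. unfold RA. rewrite mapp_mmul.
      unfold mapp at 1, Sg; cbn [vx vy vz m11 m12 m13 m21 m22 m23 m31 m32 m33]. lra.
Qed.
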